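(* Let $q\in\mathbb{C}$, $|q|<1$. For each $\mathfrak{t}\in\{\widetilde{\mathrm{I}},\mathrm{II},\mathrm{III},\widetilde{\mathrm{IV}}\}$ and all $u,v\in\mathfrak{A}^0_{\mathfrak{t}}$, $$\mathfrak{z}_q[u*_{\mathfrak{t}}v]=\mathfrak{z}_q[u]\,\mathfrak{z}_q[v].$$
   Context: For integer tuples $\mathbf{t},\mathbf{s}$ of length $d$ put $\mathfrak{z}_q^{\mathbf{t}}[\mathbf{s}]=\sum_{k_1>\dots>k_d>0}\prod_{j=1}^d\frac{q^{k_jt_j}}{(1-q^{k_j})^{s_j}}$. All algebras are over $\mathbb{Q}$; $\mathbf{1}$ is the empty word. For a free algebra on a set of letters with a commutative bilinear product $[\cdot,\cdot]$ on the span of letters, the associated stuffle $*$ is the bilinear product with $\mathbf{1}*u=u*\mathbf{1}=u$ and $(\alpha u)*(\beta v)=\alpha(u*\beta v)+\beta(\alpha u*v)+[\alpha,\beta](u*v)$ ($\alpha,\beta$ letters, $u,v$ words). Type $\widetilde{\mathrm{I}}$: $\mathfrak{A}^1_{\widetilde{\mathrm{I}}}$ = free algebra on $\theta$, $z_k$ ($k\ge1$), $[z_k,z_l]=z_{k+l}+z_{k+l-1}$, $[\theta,z_k]=[z_k,\theta]=z_{k+1}$, $[\theta,\theta]=z_2-\theta$. $\mathfrak{A}^0_{\widetilde{\mathrm{I}}}=\mathbb{Q}\mathbf{1}+\theta\mathfrak{A}^1_{\widetilde{\mathrm{I}}}+\sum_{k\ge2}z_k\mathfrak{A}^1_{\widetilde{\mathrm{I}}}$.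 $\mathfrak{z}_q$ is $\mathbb{Q}$-linear with $\mathfrak{z}_q[\mathbf{1}]=1$ and $\mathfrak{z}_q[y_1\cdots y_d]=\sum_{k_1>\dots>k_d>0}\prod_jM_{k_j}(y_j)$, $M_k(\theta)=\frac{q^k}{1-q^k}$, $M_k(z_s)=\frac{q^{(s-1)k}}{(1-q^k)^s}$. Type II: $\mathfrak{A}^1_{\mathrm{II}}$ = free algebra on $z'_k$ ($k\ge0$), $[z'_k,z'_l]=z'_{k+l}$; $\mathfrak{A}^0_{\mathrm{II}}=\mathbb{Q}\mathbf{1}+\sum_{k\ge1}z'_k\mathfrak{A}^1_{\mathrm{II}}$; $\mathfrak{z}_q[\mathbf{1}]=1$, $\mathfrak{z}_q[z'_{s_1}\cdots z'_{s_d}]=\mathfrak{z}_q^{(s_1,\dots,s_d)}[s_1,\dots,s_d]$. Type III: $B$ = free algebra on $z_k$ ($k\in\mathbb{Z}$) with stuffle $*_B$ from $[z_k,z_l]=z_{k+l}$. $\mathfrak{A}^0_{\mathrm{III}}$ = $\mathbb{Q}$-span of symbols $z'_kw$ ($k\in\mathbb{Z}$, $w$ a word of $B$). $\sigma_-(z'_nw):=z_nw-z_{n-1}w$. $z'_ku*_{\mathrm{III}}z'_lv:=z'_k(u*_B\sigma_-(z'_lv))+z'_l(\sigma_-(z'_ku)*_Bv)+(z'_{k+l}-z'_{k+l-1})(u*_Bv)$, extended bilinearly. $\mathfrak{z}_q[z'_{s_1}z_{s_2}\cdots z_{s_d}]=\mathfrak{z}_q^{(1,0,\dots,0)}[s_1,\dots,s_d]$,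 extended linearly. Type $\widetilde{\mathrm{IV}}$: $C$ = free algebra on $z'_k$ ($k\ge0$) with stuffle $*_C$ from $[z'_k,z'_l]=z'_{k+l}$. $\mathfrak{A}^1_{\widetilde{\mathrm{IV}}}=\mathbb{Q}\mathbf{1}\oplus\theta C\oplus\bigoplus_{k\ge1}z_kC$, $\mathfrak{A}^0_{\widetilde{\mathrm{IV}}}=\mathbb{Q}\mathbf{1}\oplus\theta C\oplus\bigoplus_{k\ge2}z_kC$. $\sigma_+(z_nw):=z'_nw+z'_{n-1}w$. $*_{\widetilde{\mathrm{IV}}}$ is bilinear with unit $\mathbf{1}$ and for $k,l\ge1$, words $u,v\in C$: $z_ku*z_lv=z_k(u*_C\sigma_+(z_lv))+z_l(\sigma_+(z_ku)*_Cv)+(z_{k+l}+z_{k+l-1})(u*_Cv)$; $z_ku*\theta v=\theta v*z_ku=z_k(u*_Cz'_1v)+\theta(\sigma_+(z_ku)*_Cv)+z_{k+1}(u*_Cv)$; $\theta u*\theta v=\theta(u*_Cz'_1v)+\theta(z'_1u*_Cv)+(z_2-\theta)(u*_Cv)$. $\mathfrak{z}_q[\mathbf{1}]=1$, $\mathfrak{z}_q[\theta z'_{s_2}\cdots z'_{s_d}]=\mathfrak{z}_q^{(1,s_2,\dots,s_d)}[1,s_2,\dots,s_d]$, $\mathfrak{z}_q[z_{s_1}z'_{s_2}\cdots z'_{s_d}]=\mathfrak{z}_q^{(s_1-1,s_2,\dots,s_d)}[s_1,\dots,s_d]$, extended linearly. *)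

(* Defs.v *)
From HB Require Import structures.
From mathcomp Require Import all_boot all_order all_algebra.
From mathcomp Require Import all_classical all_reals all_analysis.
From mathcomp Require Import complex.
Set Implicit Arguments. Unset Strict Implicit. Unset Printing Implicit Defensive.
Import Order.TTheory GRing.Theory Num.Theory numFieldNormedType.Exports.
Local Open Scope ring_scope.

(* Formal Q-linear combinations of "words" (elements of the free Q-vector    *)
(* space on a set W of basis words), represented as finite lists of          *)
(* (coefficient, basis word) pairs.                                          *)
Definition lc (W : Type) := seq (rat * W).

Definition lc_prod (W : Type) (mul : W -> W -> lc W) (u v : lc W) : lc W :=
  flatten (map (fun x : rat * W =>
    flatten (map (fun y : rat * W =>
      map (fun rw : rat * W => (x.1 * y.1 * rw.1, rw.2)) (mul x.2 y.2)) v)) u).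

Definition lc_eval (W : Type) (C : unitRingType) (f : W -> C) (u : lc W) : C :=
  \sum_(p <- u) ratr p.1 * f p.2.

Definition lc_pre (A : Type) (c : rat) (a : A) (L : lc (seq A)) : lc (seq A) :=
  [seq (c * p.1, a :: p.2) | p <- L].

Fixpoint stuffle (A : Type) (br : A -> A -> lc A) (u : seq A) : seq A -> lc (seq A) :=
  match u with
  | [::] => fun v => [:: (1, v)]
  | a :: u' =>
      fix st2 (v : seq A) : lc (seq A) :=
        match v with
        | [::] => [:: (1, a :: u')]
        | b :: v' =>
            lc_pre 1 a (stuffle br u' v)
            ++ lc_pre 1 b (st2 v')
            ++ flatten [seq lc_pre cx.1 cx.2 (stuffle br u' v') | cx <- br a b]
        end
  end.

Definition lc_stuffle (A : Type) (br : A -> A -> lc A) (u v : lc (seq A)) : lc (seq A) :=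
  lc_prod (stuffle br) u v.

Section QMZV.
Variable R : realType.
Local Notation C := (R[i]^o).

Definition qterm (q : C) (t s : int) (k : nat) : C :=
  (q ^+ k) ^ t / (1 - q ^+ k) ^ s.

Fixpoint msum (q : C) (ts : seq (int * int)) (N : nat) : C :=
  match ts with
  | [::] => 1
  | p :: ts' => \sum_(1 <= k < N.+1) qterm q p.1 p.2 k * msum q ts' k.-1
  end.

Definition zqts (q : C) (ts : seq (int * int)) : C := limn (msum q ts).

End QMZV.

Inductive letI := ThetaI | ZI of nat.

Definition brI (a b : letI) : lc letI :=
  match a, b with
  | ZI k, ZI l => [:: (1, ZI (k + l)); (1, ZI (k + l - 1))]
  | ThetaI, ZI k => [:: (1, ZI k.+1)]
  | ZI k, ThetaI => [:: (1, ZI k.+1)]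
  | ThetaI, ThetaI => [:: (1, ZI 2); (-1, ThetaI)]
  end.

Definition letterA1I (a : letI) : bool :=
  match a with ThetaI => true | ZI k => 1 <= k end%N.

Definition wordA0I (w : seq letI) : bool :=
  all letterA1I w &&
  match w with
  | [::] => true
  | ThetaI :: _ => true
  | ZI k :: _ => (2 <= k)%N
  end.

Definition tsI (a : letI) : int * int :=
  match a with ThetaI => (1, 1) | ZI s => (Posz s - 1, Posz s) end.

Definition zqI (R : realType) (q : R[i]^o) (u : lc (seq letI)) : R[i]^o :=
  lc_eval (fun w => zqts q (map tsI w)) u.

(* Type II : letters z'_k (k >= 0), encoded by k : nat                      *)
Definition brII (k l : nat) : lc nat := [:: (1, (k + l)%N)].

Definition wordA0II (w : seq nat) : bool :=
  match w with [::] => true | k :: _ => (1 <= k)%N end.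

Definition zqII (R : realType) (q : R[i]^o) (u : lc (seq nat)) : R[i]^o :=
  lc_eval (fun w => zqts q [seq (Posz s, Posz s) | s <- w]) u.

(* Type III : B = free algebra on z_k (k in Z), word = seq int;              *)
(* A^0_III = span of symbols z'_k w, encoded as pairs (k, w).               *)
Definition brB (k l : int) : lc int := [:: (1, k + l)].

Definition stB (u v : seq int) : lc (seq int) := stuffle brB u v.

Definition sigma_minus (n : int) (w : seq int) : lc (seq int) :=
  [:: (1, n :: w); (-1, (n - 1) :: w)].

Definition lc_preIII (k : int) (L : lc (seq int)) : lc (int * seq int) :=
  [seq (p.1, (k, p.2)) | p <- L].

Definition prodIII (x y : int * seq int) : lc (int * seq int) :=
  let: (k, u) := x in let: (l, v) := y in
  lc_preIII k (lc_prod stB [:: (1, u)] (sigma_minus l v))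
  ++ lc_preIII l (lc_prod stB (sigma_minus k u) [:: (1, v)])
  ++ lc_preIII (k + l) (stB u v)
  ++ [seq (- p.1, (k + l - 1, p.2)) | p <- stB u v].

Definition lc_prodIII (u v : lc (int * seq int)) : lc (int * seq int) :=
  lc_prod prodIII u v.

Definition zqIII (R : realType) (q : R[i]^o) (u : lc (int * seq int)) : R[i]^o :=
  lc_eval (fun x => zqts q ((1, x.1) :: [seq (0, s) | s <- x.2])) u.

(* Type IV~ : C = free algebra on z'_k (k >= 0), words seq nat;              *)
(* basis words of A^1_IV~ : 1 (None), theta w, z_k w (k >= 1), w in C.       *)
Inductive headIV := ThetaIV | ZIV of nat.
Definition wordIV := option (headIV * seq nat).

Definition brC (k l : nat) : lc nat := [:: (1, (k + l)%N)].
Definition stC (u v : seq nat) : lc (seq nat) := stuffle brC u v.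

Definition sigma_plus (n : nat) (w : seq nat) : lc (seq nat) :=
  [:: (1, n :: w); (1, n.-1 :: w)].

Definition lc_preIV (c : rat) (h : headIV) (L : lc (seq nat)) : lc wordIV :=
  [seq (c * p.1, Some (h, p.2)) | p <- L].

Definition prodIV (x y : wordIV) : lc wordIV :=
  match x, y with
  | None, _ => [:: (1, y)]
  | _, None => [:: (1, x)]
  | Some (ZIV k, u), Some (ZIV l, v) =>
      lc_preIV 1 (ZIV k) (lc_prod stC [:: (1, u)] (sigma_plus l v))
      ++ lc_preIV 1 (ZIV l) (lc_prod stC (sigma_plus k u) [:: (1, v)])
      ++ lc_preIV 1 (ZIV (k + l)) (stC u v)
      ++ lc_preIV 1 (ZIV (k + l - 1)) (stC u v)
  | Some (ZIV k, u), Some (ThetaIV, v)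
  | Some (ThetaIV, v), Some (ZIV k, u) =>
      lc_preIV 1 (ZIV k) (stC u (1%N :: v))
      ++ lc_preIV 1 ThetaIV (lc_prod stC (sigma_plus k u) [:: (1, v)])
      ++ lc_preIV 1 (ZIV k.+1) (stC u v)
  | Some (ThetaIV, u), Some (ThetaIV, v) =>
      lc_preIV 1 ThetaIV (stC u (1%N :: v))
      ++ lc_preIV 1 ThetaIV (stC (1%N :: u) v)
      ++ lc_preIV 1 (ZIV 2) (stC u v)
      ++ lc_preIV (-1) ThetaIV (stC u v)
  end.

Definition lc_prodIV (u v : lc wordIV) : lc wordIV := lc_prod prodIV u v.

Definition wordA0IV (x : wordIV) : bool :=
  match x with
  | None => true
  | Some (ThetaIV, _) => true
  | Some (ZIV k, _) => (2 <= k)%N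
  end.

Definition zqIV (R : realType) (q : R[i]^o) (u : lc wordIV) : R[i]^o :=
  lc_eval (fun x => match x with
    | None => 1
    | Some (ThetaIV, w) => zqts q ((1, 1) :: [seq (Posz s, Posz s) | s <- w])
    | Some (ZIV s1, w) =>
        zqts q ((Posz s1 - 1, Posz s1) :: [seq (Posz s, Posz s) | s <- w])
    end) u.

(* Main.v *)
Require Import Defs.
From HB Require Import structures.
From mathcomp Require Import all_boot all_order all_algebra.
From mathcomp Require Import all_classical all_reals all_analysis.
From mathcomp Require Import complex.
From mathcomp Require Import ring lra zify.
Import Order.TTheory GRing.Theory Num.Theory numFieldNormedType.Exports.
Local Open Scope ring_scope.
Local Open Scope classical_set_scope.
Local Open Scope complex_scope.
Local Notation ms := Defs.msum.
Section Alg.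
Variable R : realType.
Local Notation C := (R[i]^o).
Variable q : C.

Lemma lc_eval_cat W (f : W -> C) (L1 L2 : lc W) :
  lc_eval f (L1 ++ L2) = lc_eval f L1 + lc_eval f L2.
Proof. by rewrite /lc_eval big_cat. Qed.

Lemma lc_eval_nil W (f : W -> C) : lc_eval f ([::] : lc W) = 0.
Proof. by rewrite /lc_eval big_nil. Qed.

Lemma lc_eval_cons W (f : W -> C) p (L : lc W) :
  lc_eval f (p :: L) = ratr p.1 * f p.2 + lc_eval f L.
Proof. by rewrite /lc_eval big_cons. Qed.

Lemma lc_eval_single W (f : W -> C) w : lc_eval f [:: (1%R, w)] = f w.
Proof. by rewrite lc_eval_cons lc_eval_nil addr0 rmorph1 mul1r. Qed.

Lemma lc_eval_flatten W (f : W -> C) (LL : seq (lc W)) :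
  lc_eval f (flatten LL) = \sum_(L <- LL) lc_eval f L.
Proof.
elim: LL => [|L LL IH] /=; first by rewrite lc_eval_nil big_nil.
by rewrite lc_eval_cat IH big_cons.
Qed.

Lemma lc_eval_map W W' (f : W' -> C) (c : rat) (phi : W -> W') (L : lc W) :
  lc_eval f [seq (c * p.1, phi p.2) | p <- L] = ratr c * lc_eval (fun w => f (phi w)) L.
Proof.
rewrite /lc_eval big_map mulr_sumr; apply: eq_bigr => p _ /=.
by rewrite rmorphM mulrA.
Qed.

Lemma lc_eval_ext W (f g : W -> C) L : (forall w, f w = g w) -> lc_eval f L = lc_eval g L.
Proof. by move=> h; rewrite /lc_eval; apply: eq_bigr => p _; rewrite h. Qed.

Lemma lc_evalD W (f g : W -> C) L :
  lc_eval (fun w => f w + g w) L = lc_eval f L + lc_eval g L.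
Proof. by rewrite /lc_eval -big_split; apply: eq_bigr => p _; rewrite mulrDr. Qed.

Lemma lc_evalZ W (k : C) (f : W -> C) L :
  lc_eval (fun w => k * f w) L = k * lc_eval f L.
Proof. by rewrite /lc_eval mulr_sumr; apply: eq_bigr => p _; rewrite mulrCA. Qed.

Lemma lc_eval0 W (L : lc W) : lc_eval (fun _ => 0 : C) L = 0.
Proof. by rewrite /lc_eval big1 // => p _; rewrite mulr0. Qed.

Lemma lc_eval_prod W (f : W -> C) mul (u v : lc W) :
  lc_eval f (lc_prod mul u v) =
  \sum_(x <- u) \sum_(y <- v) ratr x.1 * ratr y.1 * lc_eval f (mul x.2 y.2).
Proof.
rewrite /lc_prod lc_eval_flatten big_map; apply: eq_bigr => x _.
rewrite lc_eval_flatten big_map; apply: eq_bigr => y _.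
rewrite /lc_eval big_map mulr_sumr; apply: eq_bigr => p _ /=.
by rewrite !rmorphM !mulrA.
Qed.

Lemma lc_prod_mult W (f : W -> C) mul (P1 P2 : pred W) (u v : lc W) :
  (forall x y, P1 x -> P2 y -> lc_eval f (mul x y) = f x * f y) ->
  all (fun p => P1 p.2) u -> all (fun p => P2 p.2) v ->
  lc_eval f (lc_prod mul u v) = lc_eval f u * lc_eval f v.
Proof.
move=> H; rewrite lc_eval_prod.
elim: u => [|x u IH] /=; first by rewrite big_nil lc_eval_nil mul0r.
move=> /andP[Px Pu] Pv; rewrite big_cons lc_eval_cons mulrDl IH //.
congr (_ + _).
clear IH.
elim: v Pv => [|y v IHv] /=; first by rewrite big_nil lc_eval_nil mulr0.
move=> /andP[Py Pv]; rewrite big_cons lc_eval_cons mulrDr IHv // H //.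
congr (_ + _).
by rewrite mulrACA.
Qed.

Lemma msumS p ts N :
  ms q (p :: ts) N.+1 = ms q (p :: ts) N + qterm q p.1 p.2 N.+1 * ms q ts N.
Proof. by rewrite /= big_nat_recr. Qed.

Lemma msum0 p ts : ms q (p :: ts) 0 = 0.
Proof. by rewrite /= big_geq. Qed.

Lemma msum_nil N : ms q [::] N = 1.
Proof. by []. Qed.

Lemma stuffle_cons2 A (br : A -> A -> lc A) a u b v :
  stuffle br (a :: u) (b :: v) =
  lc_pre 1 a (stuffle br u (b :: v)) ++ lc_pre 1 b (stuffle br (a :: u) v)
  ++ flatten [seq lc_pre cx.1 cx.2 (stuffle br u v) | cx <- br a b].
Proof. by []. Qed.

Lemma sumD_seq T (s : seq T) (F G : T -> C) :
  \sum_(i <- s) (F i + G i) = \sum_(i <- s) F i + \sum_(i <- s) G i.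
Proof. by rewrite big_split. Qed.

Section Stuffle.
Variables (A : Type) (br : A -> A -> lc A) (g : A -> int * int) (P : pred A).
Local Notation f a k := (qterm q (g a).1 (g a).2 k).
Local Notation Y N := (fun w => ms q (map g w) N).
Hypothesis Hbr : forall a b k, (0 < k)%N -> P a -> P b ->
  f a k * f b k = lc_eval (fun x => f x k) (br a b).

Lemma YS N a u : ms q (map g (a :: u)) N.+1 = ms q (map g (a :: u)) N + f a N.+1 * ms q (map g u) N.
Proof. exact: msumS. Qed.
Lemma Y0 a u : ms q (map g (a :: u)) 0 = 0.
Proof. exact: msum0. Qed.

Lemma lc_eval_preY N c a L :
  lc_eval (Y N.+1) (lc_pre c a L) =
  lc_eval (Y N) (lc_pre c a L) + ratr c * f a N.+1 * lc_eval (Y N) L.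
Proof.
rewrite /lc_pre !lc_eval_map /=.
rewrite (@lc_eval_ext _ _ (fun w => ms q (g a :: map g w) N + f a N.+1 * ms q (map g w) N)); last by move=> w; exact: msumS.
rewrite lc_evalD lc_evalZ.
by rewrite mulrDr mulrA.
Qed.

Lemma lc_eval_preY0 c a L : lc_eval (Y 0) (lc_pre c a L) = 0.
Proof.
rewrite /lc_pre !lc_eval_map /=.
rewrite (@lc_eval_ext _ _ (fun _ => 0)); last by move=> w; exact: msum0.
by rewrite lc_eval0 mulr0.
Qed.

Lemma stuffle_fin N : forall u v, all P u -> all P v ->
  lc_eval (Y N) (stuffle br u v) = Y N u * Y N v.
Proof.
elim: N => [|N IH] u0 v0 hu hv; case: u0 hu => [|a u] hu; case: v0 hv => [|b v] hv.
- by rewrite lc_eval_single /= mul1r.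
- by rewrite lc_eval_single /= mul1r.
- by rewrite lc_eval_single /= mulr1.
- rewrite stuffle_cons2 !lc_eval_cat lc_eval_flatten big_map !lc_eval_preY0.
  rewrite big1 => [|cx _]; last exact: lc_eval_preY0.
  by rewrite !Y0 mul0r !addr0.
- by rewrite lc_eval_single /= mul1r.
- by rewrite lc_eval_single /= mul1r.
- by rewrite lc_eval_single /= mulr1.
- case/andP: (hu) => Pa Pu; case/andP: (hv) => Pb Pv.
  have E : lc_eval (Y N) (lc_pre 1 a (stuffle br u (b :: v)) ++ lc_pre 1 b (stuffle br (a :: u) v)
    ++ flatten [seq lc_pre cx.1 cx.2 (stuffle br u v) | cx <- br a b]) = ms q (map g (a :: u)) N * ms q (map g (b :: v)) N
    := IH (a :: u) (b :: v) hu hv.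
  rewrite !lc_eval_cat lc_eval_flatten big_map in E.
  rewrite stuffle_cons2 !lc_eval_cat lc_eval_flatten big_map !lc_eval_preY.
  rewrite (eq_bigr _ (fun cx _ => lc_eval_preY N cx.1 cx.2 (stuffle br u v))) sumD_seq.
  rewrite -mulr_suml.
  have -> : \sum_(i <- br a b) ratr i.1 * f i.2 N.+1 = f a N.+1 * f b N.+1.
    by rewrite Hbr.
  rewrite IH // IH // IH // rmorph1 !mul1r !YS.
  move: E.
  set L1 := lc_eval _ (lc_pre 1 a _).
  set L2 := lc_eval _ (lc_pre 1 b _).
  set L3 := \sum_(j <- br a b) _.
  move=> E.
  have -> : L1 = ms q (map g (a :: u)) N * ms q (map g (b :: v)) N - L2 - L3.
    by rewrite -E; ring.
  ring.
Qed.
End Stuffle.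
End Alg.

Lemma all_flatten T (a : pred T) (s : seq (seq T)) : all a (flatten s) = all (all a) s.
Proof. by elim: s => //= x s IH; rewrite all_cat IH. Qed.

Section Closure.
Variables (A : Type) (br : A -> A -> lc A).

Lemma all_pre (P : pred (seq A)) c a (L : lc (seq A)) :
  (forall w, P (a :: w)) -> all (fun p => P p.2) (lc_pre c a L).
Proof.
move=> h; rewrite /lc_pre all_map; apply: sub_all (all_predT L) => p _ /=; exact: h.
Qed.

Lemma all_pre2 (P : pred (seq A)) c a (L : lc (seq A)) (Q : pred (seq A)) :
  (forall w, Q w -> P (a :: w)) -> all (fun p => Q p.2) L -> all (fun p => P p.2) (lc_pre c a L).
Proof.
move=> h hL; rewrite /lc_pre all_map; apply: sub_all hL => p /= hp; exact: h.
Qed.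

Lemma stuffle_allP (P : pred A)
  (Pbr : forall a b, P a -> P b -> all (fun cx => P cx.2) (br a b)) :
  forall u v, all P u -> all P v -> all (fun p => all P p.2) (stuffle br u v).
Proof.
elim=> [|a u IHu] v hu hv; first by rewrite /= hv.
elim: v hv => [|b v IHv] hv; first by rewrite /= andbT; exact: hu.
case/andP: (hu) => Pa Pu; case/andP: (hv) => Pb Pv.
rewrite stuffle_cons2 !all_cat.
apply/and3P; split.
- apply: (all_pre2 _ _ _ _ (all P) _ (IHu _ Pu hv)) => w hw /=; by rewrite Pa.
- apply: (all_pre2 _ _ _ _ (all P) _ (IHv Pv)) => w hw /=; by rewrite Pb.
- rewrite all_flatten all_map; apply: sub_all (Pbr _ _ Pa Pb) => cx /= Pc.
  apply: (all_pre2 _ _ _ _ (all P) _ (IHu _ Pu Pv)) => w hw /=; by rewrite Pc.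
Qed.

Definition headOK (H : pred A) (w : seq A) := if w is a :: _ then H a else true.

Lemma stuffle_head (H : pred A)
  (Hbr : forall a b, H a -> H b -> all (fun cx => H cx.2) (br a b)) u v :
  headOK H u -> headOK H v -> all (fun p => headOK H p.2) (stuffle br u v).
Proof.
case: u => [|a u]; case: v => [|b v] hu hv; try by rewrite /= ?andbT.
rewrite stuffle_cons2 !all_cat.
apply/and3P; split.
- by apply: all_pre => w.
- by apply: all_pre => w.
- rewrite all_flatten all_map; apply: sub_all (Hbr _ _ hu hv) => cx /= Pc.
  by apply: all_pre => w.
Qed.
End Closure.

Notation normc := ComplexField.Normc.normc.
Notation cRe := (@complex.Re _).
Notation cIm := (@complex.Im _).

Section Norms.
Variable R : realType.

Lemma normE (z : R[i]) : `|z| = (normc z)%:C.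
Proof. by case: z. Qed.

Lemma normE' (z : R[i]^o) : `|z| = (normc z)%:C.
Proof. by case: z. Qed.

Lemma normc_ge0 (z : R[i]) : 0 <= normc z.
Proof. by case: z => a b; exact: sqrtr_ge0. Qed.

Lemma normcM' (x y : R[i]) : normc (x * y) = normc x * normc y.
Proof. exact: ComplexField.Normc.normcM. Qed.

Lemma normcV' (x : R[i]) : normc (x^-1) = (normc x)^-1.
Proof. exact: ComplexField.Normc.normcV. Qed.

Lemma normc1' : normc (1 : R[i]) = 1.
Proof. exact: ComplexField.Normc.normc1. Qed.

Lemma normc0' : normc (0 : R[i]) = 0.
Proof. exact: ComplexField.Normc.normc0. Qed.

Lemma normcD' (x y : R[i]) : normc (x + y) <= normc x + normc y.
Proof. exact: le_normcD. Qed.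

Lemma normcN' (x : R[i]) : normc (- x) = normc x.
Proof. exact: normcN. Qed.

Lemma normcX (z : R[i]) n : normc (z ^+ n) = normc z ^+ n.
Proof.
elim: n => [|n IH]; first by rewrite !expr0 normc1'.
by rewrite !exprS normcM' IH.
Qed.

Lemma normcRe (z : R[i]) : `|cRe z| <= normc z.
Proof.
case: z => a b /=.
by rewrite -sqrtr_sqr ler_sqrt ?addr_ge0 ?sqr_ge0 // lerDl sqr_ge0.
Qed.

Lemma normcIm (z : R[i]) : `|cIm z| <= normc z.
Proof.
case: z => a b /=.
by rewrite -sqrtr_sqr ler_sqrt ?addr_ge0 ?sqr_ge0 // lerDr sqr_ge0.
Qed.

Lemma normcReIm (z : R[i]) : normc z <= `|cRe z| + `|cIm z|.
Proof.
case: z => a b /=.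
rewrite -[X in _ <= X]ger0_norm ?addr_ge0 // -sqrtr_sqr ler_sqrt ?sqr_ge0 //.
have ha : `|a| ^+ 2 = a ^+ 2 by rewrite real_normK ?num_real.
have hb : `|b| ^+ 2 = b ^+ 2 by rewrite real_normK ?num_real.
have hab : 0 <= `|a| * `|b| by rewrite mulr_ge0.
rewrite sqrrD ha hb; nra.
Qed.

End Norms.

Section Bounds.
Variable R : realType.
Local Notation C := (R[i]^o).
Variable q : C.
Hypothesis hq : `|q| < 1.
Local Notation r := (normc q).

Lemma r_lt1 : r < 1.
Proof. by move: hq; rewrite normE' ltcE /= => /andP[]. Qed.

Lemma r_ge0 : 0 <= r.
Proof. exact: normc_ge0. Qed.

Lemma rX_le1 k : r ^+ k <= 1.
Proof. exact: (exprn_ile1 _ r_ge0 (ltW r_lt1)). Qed.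

Lemma rX_le k : (0 < k)%N -> r ^+ k <= r.
Proof.
case: k => // k _; rewrite exprS ler_piMr ?r_ge0 //; exact: rX_le1.
Qed.

Lemma nD_lb k : (0 < k)%N -> 1 - r <= normc (1 - q ^+ k).
Proof.
move=> k0.
have h : normc (1 : R[i]) <= normc (1 - q ^+ k) + normc (q ^+ k).
  by rewrite -{1}(subrK (q ^+ k) 1); exact: normcD'.
move: h; rewrite normc1' normcX => h.
have := rX_le k k0; lra.
Qed.

Lemma nD_ub k : normc (1 - q ^+ k) <= 2.
Proof.
apply: le_trans (normcD' _ _ _) _.
rewrite normcN' normc1' normcX.
have := rX_le1 k; lra.
Qed.

Lemma nD_gt0 k : (0 < k)%N -> 0 < normc (1 - q ^+ k).
Proof. move=> k0; have := nD_lb k k0; have := r_lt1; lra. Qed.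

Lemma D_neq0 k : (0 < k)%N -> (1 - q ^+ k : C) != 0.
Proof.
move=> k0; apply/eqP => h; have := nD_gt0 k k0.
by rewrite h normc0' ltxx.
Qed.

Lemma Dinv_bound (s : int) : exists M, 0 <= M /\
  forall k, (0 < k)%N -> normc (((1 - q ^+ k) ^ s)^-1 : R[i]) <= M.
Proof.
have r1 := r_lt1.
case: s => n.
- exists (((1 - r) ^+ n)^-1); split.
    by rewrite invr_ge0 exprn_ge0 // subr_ge0 ltW.
  move=> k k0.
  change ((1 - q ^+ k) ^ Posz n) with ((1 - q ^+ k) ^+ n).
  rewrite normcV' normcX lef_pV2 ?posrE ?exprn_gt0 ?subr_gt0 ?(nD_gt0 k k0) //.
  rewrite lerXn2r ?nnegrE ?subr_ge0 ?normc_ge0 ?(ltW r1) //; exact: nD_lb.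
- exists (2 ^+ n.+1); split; first by rewrite exprn_ge0.
  move=> k k0.
  change ((1 - q ^+ k) ^ Negz n) with ((1 - q ^+ k) ^+ n.+1)^-1.
  rewrite invrK normcX lerXn2r ?nnegrE ?normc_ge0 //.
  exact: nD_ub.
Qed.

Lemma qterm_bound0 (t s : int) : 0 <= t -> exists M, 0 <= M /\
  forall k, (0 < k)%N -> normc (qterm q t s k) <= M.
Proof.
case: t => // n _.
have [M [M0 HM]] := Dinv_bound s.
exists M; split => // k k0.
rewrite /qterm.
change ((q ^+ k) ^ Posz n) with ((q ^+ k) ^+ n).
rewrite normcM' !normcX.
rewrite -[M]mul1r ler_pM ?exprn_ge0 ?normc_ge0 ?r_ge0 ?HM //.
by rewrite -exprM rX_le1.
Qed.

Lemma qterm_bound1 (t s : int) : 0 < t -> exists M, 0 <= M /\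
  forall k, (0 < k)%N -> normc (qterm q t s k) <= M * r ^+ k.
Proof.
case: t => // n n0.
have [M [M0 HM]] := Dinv_bound s.
exists M; split => // k k0.
rewrite /qterm.
change ((q ^+ k) ^ Posz n) with ((q ^+ k) ^+ n).
rewrite normcM' !normcX mulrC.
rewrite ler_pM ?exprn_ge0 ?normc_ge0 ?r_ge0 ?HM //.
case: n n0 => // n _.
by rewrite exprS ler_piMr ?exprn_ge0 ?r_ge0 // exprn_ile1 ?exprn_ge0 ?r_ge0 ?rX_le1.
Qed.

End Bounds.

Section Conv.
Variable R : realType.
Local Notation C := (R[i]^o).
Variable q : C.
Hypothesis hq : `|q| < 1.
Local Notation r := (normc q).

Definition lam := 2 / (1 + r).

Lemma lam_prop : 1 < lam /\ r * lam < 1.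
Proof.
have r1 := @r_lt1 _ _ hq; have r0 := @r_ge0 _ q.
have h1 : 0 < 1 + r by lra.
have e : lam * (1 + r) = 2 by rewrite /lam mulfVK // gt_eqF.
split; nra.
Qed.

Lemma lam_ge0 : 0 <= lam.
Proof. have [h _] := lam_prop; lra. Qed.

Lemma msum_bound ts : all (fun p => 0 <= p.1) ts ->
  exists B, 0 <= B /\ forall n, normc (ms q ts n : R[i]) <= B * lam ^+ n.
Proof.
have [l1 rl1] := lam_prop.
elim: ts => [_|p ts IH /andP[p0 hts]].
  exists 1; split => // n; rewrite msum_nil normc1' mul1r exprn_ege1 //; exact: ltW.
have [M [M0 HM]] := @qterm_bound0 _ _ hq _ p.2 p0.
have [B [B0 HB]] := IH hts.
have l0 : 0 < lam - 1 by lra.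
exists (M * B / (lam - 1)); split; first by rewrite divr_ge0 ?mulr_ge0 // ltW.
elim => [|n IHn].
  by rewrite msum0 normc0' mulr_ge0 // ?exprn_ge0 ?lam_ge0 // divr_ge0 ?mulr_ge0 // ltW.
rewrite msumS; apply: le_trans (normcD' _ _ _) _.
rewrite normcM'.
have h2 : normc (qterm q p.1 p.2 n.+1 : R[i]) * normc (ms q ts n : R[i]) <= M * (B * lam ^+ n).
  by rewrite ler_pM ?normc_ge0 // HM.
apply: le_trans (lerD IHn h2) _.
rewrite exprS le_eqVlt; apply/orP; left.
apply/eqP; field.
by rewrite gt_eqF.
Qed.

Lemma real_series_cvg (c : nat -> R) K rho : 0 <= K -> 0 <= rho -> rho < 1 ->
  (forall k, `|c k| <= K * rho ^+ k) -> cvgn (series c).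
Proof.
move=> K0 r0 r1 hc.
apply: normed_cvg.
apply: (@series_le_cvg _ _ (geometric K rho)).
- by move=> n /=.
- by move=> n; rewrite /geometric /= mulr_ge0 // exprn_ge0.
- by move=> n; rewrite /geometric /=; exact: hc.
- by apply: is_cvg_geometric_series; rewrite ger0_norm.
Qed.

End Conv.

Section Conv2.
Variable R : realType.
Local Notation C := (R[i]^o).

Lemma cRe_sum (b : nat -> C) n : cRe (\sum_(0 <= k < n) b k) = \sum_(0 <= k < n) cRe (b k).
Proof.
elim: n => [|n IH]; first by rewrite !big_geq.
rewrite !big_nat_recr //= -IH.
by case: (\sum_(0 <= k < n) b k) => x y; case: (b n).
Qed.

Lemma cIm_sum (b : nat -> C) n : cIm (\sum_(0 <= k < n) b k) = \sum_(0 <= k < n) cIm (b k).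
Proof.
elim: n => [|n IH]; first by rewrite !big_geq.
rewrite !big_nat_recr //= -IH.
by case: (\sum_(0 <= k < n) b k) => x y; case: (b n).
Qed.

Lemma cvg_ReIm (f : nat -> C) :
  cvgn (fun n => cRe (f n)) -> cvgn (fun n => cIm (f n)) -> cvgn f.
Proof.
move=> ha hb.
set a := limn (fun n => cRe (f n)).
set b := limn (fun n => cIm (f n)).
apply/cvg_ex; exists (a +i* b : C).
apply/cvgrPdist_lt => e e0.
have [eI eR] : cIm e = 0 /\ 0 < cRe e.
  by move: e0; rewrite ltcE /= => /andP[/eqP <-].
have eE : e = (cRe e)%:C by move: eI; case: e {e0 eR} => u v /= ->.
have e2 : 0 < cRe e / 2 by rewrite divr_gt0.
have Ha : \forall n \near \oo, `|a - cRe (f n)| < cRe e / 2.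
  by move/cvgrPdist_lt: ha; apply.
have Hb : \forall n \near \oo, `|b - cIm (f n)| < cRe e / 2.
  by move/cvgrPdist_lt: hb; apply.
apply: (filterS2 _ _ Ha Hb) => n.
case: (f n) => x y /= h1 h2.
rewrite [X in _ < X]eE normE' ltcR.
apply: le_lt_trans (normcReIm _ _) _ => /=.
lra.
Qed.

End Conv2.

Definition goodts (ts : seq (int * int)) :=
  if ts is p :: rest then (0 < p.1) && all (fun p => 0 <= p.1) rest else true.

Section Conv3.
Variable R : realType.
Local Notation C := (R[i]^o).
Variable q : C.
Hypothesis hq : `|q| < 1.
Local Notation r := (normc q).

Lemma msum_cvg ts : goodts ts -> cvgn (ms q ts).
Proof.
case: ts => [_|p rest /andP[p0 hr]].
  have -> : ms q [::] = (fun _ => 1) by [].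
  exact: is_cvg_cst.
have [M [M0 HM]] := @qterm_bound1 _ _ hq _ p.2 p0.
have [B [B0 HB]] := @msum_bound _ _ hq _ hr.
have [l1 rl1] := @lam_prop _ _ hq.
have r0 := @r_ge0 _ q.
set b := fun k => qterm q p.1 p.2 k.+1 * ms q rest k.
have Eb : ms q (p :: rest) = series b.
  apply: funext => N; rewrite /series /= big_add1 /=.
  by apply: eq_bigr.
have hb : forall k, normc (b k : R[i]) <= M * B * (r * (@lam R q)) ^+ k.
  move=> k; rewrite /b normcM'.
  apply: le_trans (ler_pM (normc_ge0 _ _) (normc_ge0 _ _) (HM k.+1 isT) (HB k)) _.
  rewrite [in X in _ <= X]exprMn [r ^+ k.+1]exprS.
  have h1 : 0 <= r ^+ k by rewrite exprn_ge0.
  have h2 : 0 <= (@lam R q) ^+ k by rewrite exprn_ge0 ?(@lam_ge0 _ _ hq).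
  have h3 : 0 <= M * B by rewrite mulr_ge0.
  have -> : M * (r * r ^+ k) * (B * (@lam R q) ^+ k) = M * B * (r ^+ k * (@lam R q) ^+ k) * r by ring.
  rewrite ler_piMr ?mulr_ge0 //; exact: ltW (@r_lt1 _ _ hq).
have rho0 : 0 <= r * (@lam R q) by rewrite mulr_ge0 ?(@lam_ge0 _ _ hq).
rewrite Eb; apply: cvg_ReIm.
- have -> : (fun n => cRe (series b n)) = series (fun k => cRe (b k)).
    by apply: funext => n; rewrite /series /= cRe_sum.
  apply: (@real_series_cvg R _ (M * B) (r * (@lam R q))) => //.
    by rewrite mulr_ge0.
  by move=> k; apply: le_trans (normcRe _ _) (hb k).
- have -> : (fun n => cIm (series b n)) = series (fun k => cIm (b k)).
    by apply: funext => n; rewrite /series /= cIm_sum.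
  apply: (@real_series_cvg R _ (M * B) (r * (@lam R q))) => //.
    by rewrite mulr_ge0.
  by move=> k; apply: le_trans (normcIm _ _) (hb k).
Qed.

End Conv3.

Section Assemble.
Variable R : realType.
Local Notation C := (R[i]^o).

Lemma lc_eval_cvg W (S : W -> nat -> C) (good : pred W) (L : lc W) :
  (forall w, good w -> cvgn (S w)) -> all (fun p => good p.2) L ->
  (fun N => lc_eval (fun w => S w N) L) @ \oo --> lc_eval (fun w => limn (S w)) L.
Proof.
move=> hS; elim: L => [|p L IH] /=.
  move=> _; rewrite lc_eval_nil.
  have -> : (fun N => lc_eval (fun w => S w N) [::]) = (fun _ => 0 : C).
    by apply: funext => N; rewrite lc_eval_nil.
  exact: cvg_cst.
move=> /andP[gp gL].
rewrite lc_eval_cons.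
have -> : (fun N => lc_eval (fun w => S w N) (p :: L)) =
  (fun N => ratr p.1 * S p.2 N + lc_eval (fun w => S w N) L).
  by apply: funext => N; rewrite lc_eval_cons.
apply: cvgD; last exact: IH.
have h := hS _ gp.
have := cvgM (cvg_cst (ratr p.1 : C)) h.
by move=> /(_ _); apply.
Qed.

Lemma assemble W mul (S : W -> nat -> C) (good : pred W) (u v : lc W) :
  (forall w, good w -> cvgn (S w)) ->
  all (fun p => good p.2) u -> all (fun p => good p.2) v ->
  all (fun p => good p.2) (lc_prod mul u v) ->
  (forall N, lc_eval (fun w => S w N) (lc_prod mul u v) =
             lc_eval (fun w => S w N) u * lc_eval (fun w => S w N) v) ->
  lc_eval (fun w => limn (S w)) (lc_prod mul u v) =
  lc_eval (fun w => limn (S w)) u * lc_eval (fun w => limn (S w)) v.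
Proof.
move=> hS gu gv guv E.
have h1 := @lc_eval_cvg _ _ _ _ hS guv.
have hu := @lc_eval_cvg _ _ _ _ hS gu.
have hv := @lc_eval_cvg _ _ _ _ hS gv.
have h2 : (fun N => lc_eval (fun w => S w N) u * lc_eval (fun w => S w N) v) @ \oo -->
   (lc_eval (fun w => limn (S w)) u * lc_eval (fun w => limn (S w)) v : C).
  have h := cvgM hu hv; exact: (h _).
have Ef : (fun N => lc_eval (fun w => S w N) (lc_prod mul u v)) =
  (fun N => lc_eval (fun w => S w N) u * lc_eval (fun w => S w N) v).
  by apply: funext => N; exact: E.
rewrite Ef in h1.
exact: (cvg_unique (@norm_hausdorff _ C) h1 h2).
Qed.
End Assemble.

Section Core.
Variable R : realType.
Local Notation C := (R[i]^o).
Variable x : C.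
Hypothesis hD : 1 - x != 0.

Lemma Dk_neq0 k : (1 - x) ^+ k != 0.
Proof. exact: expf_neq0. Qed.

Lemma Dz_neq0 (k : int) : (1 - x) ^ k != 0.
Proof. exact: expfz_neq0. Qed.

Lemma coreZZ k l : x ^+ k / (1 - x) ^+ k.+1 * (x ^+ l / (1 - x) ^+ l.+1) =
  x ^+ (k + l).+1 / (1 - x) ^+ (k + l).+2 + x ^+ (k + l) / (1 - x) ^+ (k + l).+1.
Proof.
have h1 := Dk_neq0 k; have h2 := Dk_neq0 l.
rewrite !exprS !exprD.
field; by rewrite ?hD ?Dk_neq0 ?Dz_neq0.
Qed.

Lemma coreTZ k : x ^+ 1 / (1 - x) ^+ 1 * (x ^+ k / (1 - x) ^+ k.+1) =
  x ^+ k.+1 / (1 - x) ^+ k.+2.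
Proof.
have h1 := Dk_neq0 k.
rewrite !exprS !expr0.
field; by rewrite ?hD ?Dk_neq0 ?Dz_neq0.
Qed.

Lemma coreTT : x ^+ 1 / (1 - x) ^+ 1 * (x ^+ 1 / (1 - x) ^+ 1) =
  x ^+ 1 / (1 - x) ^+ 2 - x ^+ 1 / (1 - x) ^+ 1.
Proof.
rewrite !expr1 expr2.
field; by rewrite ?hD ?Dk_neq0 ?Dz_neq0.
Qed.

Lemma coreII k l : x ^+ k / (1 - x) ^+ k * (x ^+ l / (1 - x) ^+ l) =
  x ^+ (k + l) / (1 - x) ^+ (k + l).
Proof.
have h1 := Dk_neq0 k; have h2 := Dk_neq0 l.
rewrite !exprD.
field; by rewrite ?hD ?Dk_neq0 ?Dz_neq0.
Qed.

Lemma coreSig k : x ^+ k.+1 / (1 - x) ^+ k.+1 + x ^+ k / (1 - x) ^+ k =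
  x ^+ k / (1 - x) ^+ k.+1.
Proof.
have h1 := Dk_neq0 k.
rewrite !exprS.
field; by rewrite ?hD ?Dk_neq0 ?Dz_neq0.
Qed.

Lemma coreB (k l : int) : x ^ 0 / (1 - x) ^ k * (x ^ 0 / (1 - x) ^ l) =
  x ^ 0 / (1 - x) ^ (k + l).
Proof.
have h1 := Dz_neq0 k; have h2 := Dz_neq0 l.
rewrite exprzDr ?unitfE // expr0z.
field; by rewrite ?hD ?Dk_neq0 ?Dz_neq0.
Qed.

Lemma coreSm (l : int) : x ^ 0 / (1 - x) ^ l - x ^ 0 / (1 - x) ^ (l - 1) =
  x ^ 1 / (1 - x) ^ l.
Proof.
move: (l - 1) (subrK 1 l) => m <-.
have h1 := Dz_neq0 m.
rewrite exprzDr ?unitfE // expr0z !expr1z.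
field; by rewrite ?hD ?Dk_neq0 ?Dz_neq0.
Qed.

Lemma coreGG (k l : int) : x ^ 1 / (1 - x) ^ k * (x ^ 1 / (1 - x) ^ l) =
  x ^ 1 / (1 - x) ^ (k + l) - x ^ 1 / (1 - x) ^ (k + l - 1).
Proof.
have h1 := Dz_neq0 k; have h2 := Dz_neq0 l.
have e : (1 - x) ^ k * (1 - x) ^ l = (1 - x) ^ (k + l - 1) * (1 - x).
  have -> : (1 - x) ^ (k + l - 1) * (1 - x) = (1 - x) ^ (k + l - 1 + 1).
    by rewrite [in RHS]exprzDr ?unitfE // expr1z.
  by rewrite subrK exprzDr ?unitfE.
have eC : (1 - x) ^ (k + l - 1) = (1 - x) ^ k * (1 - x) ^ l / (1 - x).
  by rewrite e mulfK.
rewrite eC exprzDr ?unitfE // expr1z.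
field; by rewrite ?hD ?Dk_neq0 ?Dz_neq0.
Qed.
End Core.

Section Helpers.
Variable R : realType.
Local Notation C := (R[i]^o).
Variable q : C.

Lemma prod_step (al be Yu Yv Zx Zy E : nat -> C) :
  Zx 0 = 0 -> (forall N, Zx N.+1 = Zx N + al N.+1 * Yu N) ->
  Zy 0 = 0 -> (forall N, Zy N.+1 = Zy N + be N.+1 * Yv N) ->
  E 0 = 0 ->
  (forall N, E N.+1 = E N + al N.+1 * (Yu N * Zy N) + be N.+1 * (Zx N * Yv N)
                      + al N.+1 * be N.+1 * (Yu N * Yv N)) ->
  forall N, E N = Zx N * Zy N.
Proof.
move=> Zx0 ZxS Zy0 ZyS E0 ES; elim=> [|N IH]; first by rewrite E0 Zx0 mul0r.
by rewrite ES IH ZxS ZyS; ring.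
Qed.

Lemma msum_comb (a b : C) p1 p2 p3 ts :
  (forall m, (0 < m)%N -> a * qterm q p1.1 p1.2 m + b * qterm q p2.1 p2.2 m = qterm q p3.1 p3.2 m) ->
  forall N, a * ms q (p1 :: ts) N + b * ms q (p2 :: ts) N = ms q (p3 :: ts) N.
Proof.
move=> h; elim=> [|N IH]; first by rewrite !msum0 !mulr0 addr0.
rewrite !msumS -IH -(h N.+1) //; ring.
Qed.

Lemma lc_eval_map1 W W' (f : W' -> C) (phi : W -> W') (L : lc W) :
  lc_eval f [seq (p.1, phi p.2) | p <- L] = lc_eval (fun w => f (phi w)) L.
Proof. by rewrite /lc_eval big_map. Qed.

Lemma lc_eval_mapN W W' (f : W' -> C) (phi : W -> W') (L : lc W) :
  lc_eval f [seq (- p.1, phi p.2) | p <- L] = - lc_eval (fun w => f (phi w)) L.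
Proof.
rewrite /lc_eval big_map -sumrN; apply: eq_bigr => p _ /=.
by rewrite rmorphN mulNr.
Qed.

Lemma lc_prod_all W mul (P1 P2 good : pred W) (u v : lc W) :
  (forall x y, P1 x -> P2 y -> all (fun p => good p.2) (mul x y)) ->
  all (fun p => P1 p.2) u -> all (fun p => P2 p.2) v ->
  all (fun p => good p.2) (lc_prod mul u v).
Proof.
move=> h hu hv; rewrite /lc_prod all_flatten all_map.
apply: sub_all hu => x /= hx; rewrite all_flatten all_map.
apply: sub_all hv => y /= hy; rewrite all_map.
by apply: sub_all (h _ _ hx hy) => p /=.
Qed.

Lemma lc_eval_head W (g : W -> int * int) (h : int * int) N (L : lc (seq W)) :
  lc_eval (fun w => ms q (h :: map g w) N.+1) L =
  lc_eval (fun w => ms q (h :: map g w) N) L +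
  qterm q h.1 h.2 N.+1 * lc_eval (fun w => ms q (map g w) N) L.
Proof.
rewrite (@lc_eval_ext _ _ _ (fun w => ms q (h :: map g w) N + qterm q h.1 h.2 N.+1 * ms q (map g w) N)).
  by rewrite lc_evalD lc_evalZ.
by move=> w; exact: msumS.
Qed.

Lemma lc_eval_head0 W (g : W -> int * int) (h : int * int) (L : lc (seq W)) :
  lc_eval (fun w => ms q (h :: map g w) 0) L = 0.
Proof.
rewrite (@lc_eval_ext _ _ _ (fun _ => 0)); first exact: lc_eval0.
by move=> w; exact: msum0.
Qed.

End Helpers.

Definition HI (a : letI) : bool := if a is ZI k then (2 <= k)%N else true.

Lemma wordA0I_E w : wordA0I w = all letterA1I w && @headOK _ HI w.
Proof. by case: w => [|[|k] w]. Qed.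

Lemma tsIZ n : tsI (ZI n.+1) = (Posz n, Posz n.+1).
Proof. by rewrite /tsI -addn1 PoszD addrK. Qed.

Lemma brI_P a b : letterA1I a -> letterA1I b -> all (fun cx => letterA1I cx.2) (brI a b).
Proof.
case: a => [|k]; case: b => [|l] //= ha hb; rewrite ?andbT //; try lia; apply/andP; split; lia.
Qed.

Lemma brI_H a b : HI a -> HI b -> all (fun cx => HI cx.2) (brI a b).
Proof.
case: a => [|k]; case: b => [|l] //= ha hb; rewrite ?andbT //=; try lia; apply/andP; split; lia.
Qed.

Lemma goodI w : wordA0I w -> goodts (map tsI w).
Proof.
rewrite wordA0I_E => /andP[ha hh].
case: w ha hh => [|a w] //= /andP[_ hw] hh.
apply/andP; split.
  by case: a hh => [|[|[|k]]] //= _; rewrite tsIZ.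
elim: w hw {hh} => [|b w IH] //= /andP[hb hw].
by rewrite IH // andbT; case: b hb => [|[|k]] //= _; rewrite tsIZ.
Qed.

Section TypeI.
Variable R : realType.
Local Notation C := (R[i]^o).
Variable q : C.
Hypothesis hq : `|q| < 1.

Local Notation fI a k := (qterm q (tsI a).1 (tsI a).2 k).

Lemma qtermN a b m : qterm q (Posz a) (Posz b) m = (q ^+ m) ^+ a / (1 - q ^+ m) ^+ b.
Proof. by []. Qed.

Lemma one_int : (1 : int) = Posz 1.
Proof. by []. Qed.

Lemma brI_id a b k : (0 < k)%N -> letterA1I a -> letterA1I b ->
  fI a k * fI b k = lc_eval (fun x => fI x k) (brI a b).
Proof.
move=> k0; have hD := @D_neq0 _ _ hq k k0.
have e : forall n, Posz n.+1 - 1 = Posz n by move=> n; rewrite -addn1 PoszD addrK.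
case: a => [|[|n]]; case: b => [|[|m]] //= _ _;
  rewrite !lc_eval_cons lc_eval_nil /= ?rmorph1 ?rmorphN1 ?mul1r ?mulN1r ?addr0.
- rewrite e !one_int !qtermN; exact: (@coreTT _ _ hD).
- rewrite !e !one_int !qtermN; exact: (@coreTZ _ _ hD m).
- rewrite !e !one_int !qtermN mulrC; exact: (@coreTZ _ _ hD n).
- rewrite addSn addnS subn1 /= !e !qtermN; exact: (@coreZZ _ _ hD n m).
Qed.

Lemma typeI (u v : lc (seq letI)) :
  all (fun p => wordA0I p.2) u -> all (fun p => wordA0I p.2) v ->
  zqI q (lc_stuffle brI u v) = zqI q u * zqI q v.
Proof.
move=> hu hv.
rewrite /zqI /zqts /lc_stuffle.
apply: (@assemble R _ _ (fun w => ms q (map tsI w)) wordA0I) => //.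
- move=> w hw; apply: (@msum_cvg _ _ hq); exact: goodI.
- apply: (@lc_prod_all _ _ wordA0I wordA0I wordA0I _ _ _ hu hv) => x y hx hy.
  move: hx hy; rewrite !wordA0I_E => /andP[hx1 hx2] /andP[hy1 hy2].
  have h1 := @stuffle_allP _ brI _ brI_P _ _ hx1 hy1.
  have h2 := @stuffle_head _ brI _ brI_H _ _ hx2 hy2.
  elim: (stuffle brI x y) h1 h2 => [|p s IH] //= /andP[p1 s1] /andP[p2 s2].
  by rewrite wordA0I_E p1 p2 IH.
- move=> N; apply: (@lc_prod_mult R _ _ _ wordA0I wordA0I _ _ _ hu hv) => x y hx hy.
  move: hx hy; rewrite !wordA0I_E => /andP[hx1 _] /andP[hy1 _].
  exact: (@stuffle_fin R q _ brI tsI letterA1I brI_id N _ _ hx1 hy1).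
Qed.

End TypeI.

Definition gII (s : nat) : int * int := (Posz s, Posz s).

Lemma wordA0II_E w : wordA0II w = @headOK _ (fun k => (0 < k)%N) w.
Proof. by case: w. Qed.

Lemma brII_H a b : (0 < a)%N -> (0 < b)%N -> all (fun cx => (0 < cx.2)%N) (brII a b).
Proof. move=> ha hb /=; rewrite andbT; lia. Qed.

Lemma brII_P (a b : nat) : true -> true -> all (fun cx => (fun _ => true) cx.2) (brII a b).
Proof. by []. Qed.

Lemma all_true T (s : seq T) : all (fun _ => true) s.
Proof. by elim: s. Qed.

Lemma goodII w : wordA0II w -> goodts (map gII w).
Proof.
case: w => [|a w] //= ha; rewrite ltz_nat ha /=.
by elim: w => //= b w ->.
Qed.

Section TypeII.
Variable R : realType.
Local Notation C := (R[i]^o).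
Variable q : C.
Hypothesis hq : `|q| < 1.

Lemma brII_id a b k : (0 < k)%N -> true -> true ->
  qterm q (gII a).1 (gII a).2 k * qterm q (gII b).1 (gII b).2 k =
  lc_eval (fun x => qterm q (gII x).1 (gII x).2 k) (brII a b).
Proof.
move=> k0 _ _; have hD := @D_neq0 _ _ hq k k0.
rewrite /brII lc_eval_single /gII /= !qtermN; exact: (@coreII _ _ hD a b).
Qed.

Lemma typeII (u v : lc (seq nat)) :
  all (fun p => wordA0II p.2) u -> all (fun p => wordA0II p.2) v ->
  zqII q (lc_stuffle brII u v) = zqII q u * zqII q v.
Proof.
move=> hu hv.
rewrite /zqII /zqts /lc_stuffle.
apply: (@assemble R _ _ (fun w => ms q (map gII w)) wordA0II) => //.
- move=> w hw; apply: (@msum_cvg _ _ hq); exact: goodII.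
- apply: (@lc_prod_all _ _ wordA0II wordA0II wordA0II _ _ _ hu hv) => x y hx hy.
  move: hx hy; rewrite !wordA0II_E => hx hy.
  have h2 := @stuffle_head _ brII _ brII_H _ _ hx hy.
  by apply: sub_all h2 => p hp; rewrite wordA0II_E.
- move=> N; apply: (@lc_prod_mult R _ _ _ wordA0II wordA0II _ _ _ hu hv) => x y hx hy.
  exact: (@stuffle_fin R q _ brII gII (fun _ => true) brII_id N _ _ (all_true _ x) (all_true _ y)).
Qed.

End TypeII.

Notation gB := (fun s : int => ((0 : int), s)).

Section TypeIII.
Variable R : realType.
Local Notation C := (R[i]^o).
Variable q : C.
Hypothesis hq : `|q| < 1.

Definition SIII (x : int * seq int) : nat -> C :=
  ms q ((1, x.1) :: [seq (0, s) | s <- x.2]).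

Local Notation YB N := (fun w => ms q (map gB w) N).

Lemma brB_id a b k : (0 < k)%N -> true -> true ->
  qterm q (gB a).1 (gB a).2 k * qterm q (gB b).1 (gB b).2 k =
  lc_eval (fun x => qterm q (gB x).1 (gB x).2 k) (brB a b).
Proof.
move=> k0 _ _; have hD := @D_neq0 _ _ hq k k0.
rewrite /brB lc_eval_single /qterm /=; exact: (@coreB _ _ hD a b).
Qed.

Lemma YBst N u v : lc_eval (YB N) (stB u v) = YB N u * YB N v.
Proof.
exact: (@stuffle_fin R q _ brB gB (fun _ => true) brB_id N _ _ (all_true _ u) (all_true _ v)).
Qed.

Lemma YBprod N (L1 L2 : lc (seq int)) :
  lc_eval (YB N) (lc_prod stB L1 L2) = lc_eval (YB N) L1 * lc_eval (YB N) L2.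
Proof.
apply: (@lc_prod_mult R _ _ _ (fun _ => true) (fun _ => true)); last 2 first.
- exact: all_true.
- exact: all_true.
by move=> x y _ _; exact: YBst.
Qed.

Lemma YBsig N l v : lc_eval (YB N) (sigma_minus l v) = ms q ((1, l) :: map gB v) N.
Proof.
rewrite /sigma_minus !lc_eval_cons lc_eval_nil addr0 rmorph1 rmorphN1.
apply: (@msum_comb R q 1 (-1) (0, l) (0, l - 1) (1, l)) => m m0.
have hD := @D_neq0 _ _ hq m m0.
rewrite mul1r mulN1r /qterm /=; exact: (@coreSm _ _ hD l).
Qed.

Lemma evalPreIII N k (L : lc (seq int)) :
  lc_eval (fun z => SIII z N) (lc_preIII k L) = lc_eval (fun w => ms q ((1, k) :: map gB w) N) L.
Proof. by rewrite /lc_preIII lc_eval_map1. Qed.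

Lemma evalNegIII N k (L : lc (seq int)) :
  lc_eval (fun z => SIII z N) [seq (- p.1, (k, p.2)) | p <- L] =
  - lc_eval (fun w => ms q ((1, k) :: map gB w) N) L.
Proof. by rewrite lc_eval_mapN. Qed.

Lemma prodIII_def k u l v : prodIII (k, u) (l, v) =
  lc_preIII k (lc_prod stB [:: (1%R, u)] (sigma_minus l v))
  ++ lc_preIII l (lc_prod stB (sigma_minus k u) [:: (1%R, v)])
  ++ lc_preIII (k + l) (stB u v)
  ++ [seq (- p.1, (k + l - 1, p.2)) | p <- stB u v].
Proof. by []. Qed.

Lemma prodIII_fin N x y :
  lc_eval (fun z => SIII z N) (prodIII x y) = SIII x N * SIII y N.
Proof.
case: x y => k u [l v].
pose E N := lc_eval (fun z => SIII z N) (prodIII (k, u) (l, v)).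
change (E N = SIII (k, u) N * SIII (l, v) N).
apply: (@prod_step R (fun m => qterm q 1 k m) (fun m => qterm q 1 l m)
   (fun N => ms q (map gB u) N) (fun N => ms q (map gB v) N)
   (SIII (k, u)) (SIII (l, v)) E).
- exact: msum0.
- by move=> n; exact: msumS.
- exact: msum0.
- by move=> n; exact: msumS.
- by rewrite /E prodIII_def !lc_eval_cat !evalPreIII evalNegIII !lc_eval_head0 oppr0 !addr0.
move=> n.
rewrite /E prodIII_def !lc_eval_cat !evalPreIII !evalNegIII !lc_eval_head.
rewrite !YBprod !lc_eval_single !YBsig !YBst.
have hD := @D_neq0 _ _ hq n.+1 isT.
have e := @coreGG _ _ hD k l.
have -> : qterm q 1 (k + l) n.+1 = qterm q 1 k n.+1 * qterm q 1 l n.+1 + qterm q 1 (k + l - 1) n.+1.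
  by rewrite /qterm e subrK.
rewrite /SIII /=.
ring.
Qed.

Lemma typeIII (u v : lc (int * seq int)) :
  zqIII q (lc_prodIII u v) = zqIII q u * zqIII q v.
Proof.
rewrite /zqIII /zqts /lc_prodIII.
apply: (@assemble R _ _ SIII (fun _ => true)) => //.
- move=> w _; apply: (@msum_cvg _ _ hq) => /=.
  by elim: w.2 => //= s w ->.
- exact: all_true.
- exact: all_true.
- exact: all_true.
- move=> N; apply: (@lc_prod_mult R _ _ _ (fun _ => true) (fun _ => true)); last 2 first.
  + exact: all_true.
  + exact: all_true.
  by move=> x y _ _; exact: prodIII_fin.
Qed.

End TypeIII.

Notation gC := (fun s : nat => (Posz s, Posz s)).

Definition hdIV (h : headIV) : int * int :=
  match h with ThetaIV => (1, 1) | ZIV s1 => (Posz s1 - 1, Posz s1) end.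

Lemma all_preIV c h (L : lc (seq nat)) : wordA0IV (Some (h, [::])) ->
  all (fun p => wordA0IV p.2) (lc_preIV c h L).
Proof.
move=> hh; rewrite /lc_preIV all_map; apply: sub_all (all_true _ L) => p _ /=.
by case: h hh.
Qed.

Lemma prodIV_good x y : wordA0IV x -> wordA0IV y -> all (fun p => wordA0IV p.2) (prodIV x y).
Proof.
case: x => [[[|k] u]|]; case: y => [[[|l] v]|] //= hx hy; rewrite ?andbT //;
  rewrite ?all_cat; (repeat (apply/andP; split)); apply: all_preIV => /=; lia.
Qed.

Section TypeIV.
Variable R : realType.
Local Notation C := (R[i]^o).
Variable q : C.
Hypothesis hq : `|q| < 1.

Definition SIV (x : wordIV) : nat -> C :=
  match x with None => fun _ => 1 | Some (h, w) => ms q (hdIV h :: map gC w) end.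

Local Notation YC N := (fun w => ms q (map gC w) N).

Lemma brC_id a b k : (0 < k)%N -> true -> true ->
  qterm q (gC a).1 (gC a).2 k * qterm q (gC b).1 (gC b).2 k =
  lc_eval (fun x => qterm q (gC x).1 (gC x).2 k) (brC a b).
Proof.
move=> k0 _ _; have hD := @D_neq0 _ _ hq k k0.
rewrite /brC lc_eval_single /= !qtermN; exact: (@coreII _ _ hD a b).
Qed.

Lemma YCst N u v : lc_eval (YC N) (stC u v) = YC N u * YC N v.
Proof.
exact: (@stuffle_fin R q _ brC gC (fun _ => true) brC_id N _ _ (all_true _ u) (all_true _ v)).
Qed.

Lemma YCprod N (L1 L2 : lc (seq nat)) :
  lc_eval (YC N) (lc_prod stC L1 L2) = lc_eval (YC N) L1 * lc_eval (YC N) L2.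
Proof.
apply: (@lc_prod_mult R _ _ _ (fun _ => true) (fun _ => true)); last 2 first.
- exact: all_true.
- exact: all_true.
by move=> x y _ _; exact: YCst.
Qed.

Lemma eZ n : Posz n.+1 - 1 = Posz n.
Proof. by rewrite -addn1 PoszD addrK. Qed.

Lemma YCsig N k v : (0 < k)%N ->
  lc_eval (YC N) (sigma_plus k v) = ms q (hdIV (ZIV k) :: map gC v) N.
Proof.
case: k => // k _.
rewrite /sigma_plus !lc_eval_cons lc_eval_nil addr0 rmorph1.
apply: (@msum_comb R q 1 1 (gC k.+1) (gC k) (hdIV (ZIV k.+1))) => m m0.
have hD := @D_neq0 _ _ hq m m0.
rewrite !mul1r /= eZ !qtermN; exact: (@coreSig _ _ hD k).
Qed.

Lemma evalPreIV N c h (L : lc (seq nat)) :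
  lc_eval (fun z => SIV z N) (lc_preIV c h L) =
  ratr c * lc_eval (fun w => ms q (hdIV h :: map gC w) N) L.
Proof. by rewrite /lc_preIV (@lc_eval_map R _ _ _ c (fun w => Some (h, w)) L). Qed.

Local Notation fH h m := (qterm q (hdIV h).1 (hdIV h).2 m).

Lemma caseZZ N k l u v : (0 < k)%N -> (0 < l)%N ->
  lc_eval (fun z => SIV z N) (prodIV (Some (ZIV k, u)) (Some (ZIV l, v))) =
  SIV (Some (ZIV k, u)) N * SIV (Some (ZIV l, v)) N.
Proof.
move=> k0 l0.
pose E N := lc_eval (fun z => SIV z N) (prodIV (Some (ZIV k, u)) (Some (ZIV l, v))).
change (E N = SIV (Some (ZIV k, u)) N * SIV (Some (ZIV l, v)) N).
apply: (@prod_step R (fun m => fH (ZIV k) m) (fun m => fH (ZIV l) m)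
   (fun N => ms q (map gC u) N) (fun N => ms q (map gC v) N)
   (SIV (Some (ZIV k, u))) (SIV (Some (ZIV l, v))) E).
- exact: msum0.
- by move=> n; exact: msumS.
- exact: msum0.
- by move=> n; exact: msumS.
- by rewrite /E /prodIV !lc_eval_cat !evalPreIV !lc_eval_head0 !mulr0 !addr0.
move=> n.
rewrite /E /prodIV !lc_eval_cat !evalPreIV !lc_eval_head.
rewrite !YCprod !lc_eval_single !YCsig // !YCst rmorph1 !mul1r.
have hD := @D_neq0 _ _ hq n.+1 isT.
have -> : fH (ZIV (k + l - 1)) n.+1 = fH (ZIV k) n.+1 * fH (ZIV l) n.+1 - fH (ZIV (k + l)) n.+1.
  case: k k0 {E} => // k _; case: l l0 => // l _.
  rewrite addSn addnS subn1 /= !eZ !qtermN (@coreZZ _ _ hD k l); ring.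
rewrite /SIV.
ring.
Qed.

Lemma caseZT N k u v : (0 < k)%N ->
  lc_eval (fun z => SIV z N) (prodIV (Some (ZIV k, u)) (Some (ThetaIV, v))) =
  SIV (Some (ZIV k, u)) N * SIV (Some (ThetaIV, v)) N.
Proof.
move=> k0.
pose E N := lc_eval (fun z => SIV z N) (prodIV (Some (ZIV k, u)) (Some (ThetaIV, v))).
change (E N = SIV (Some (ZIV k, u)) N * SIV (Some (ThetaIV, v)) N).
apply: (@prod_step R (fun m => fH (ZIV k) m) (fun m => fH ThetaIV m)
   (fun N => ms q (map gC u) N) (fun N => ms q (map gC v) N)
   (SIV (Some (ZIV k, u))) (SIV (Some (ThetaIV, v))) E).
- exact: msum0.
- by move=> n; exact: msumS.
- exact: msum0.
- by move=> n; exact: msumS.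
- by rewrite /E /prodIV !lc_eval_cat !evalPreIV !lc_eval_head0 !mulr0 !addr0.
move=> n.
rewrite /E /prodIV !lc_eval_cat !evalPreIV !lc_eval_head.
rewrite !YCprod !lc_eval_single !YCsig // !YCst rmorph1 !mul1r.
have e1 : forall n, ms q (map gC (1%N :: v)) n = SIV (Some (ThetaIV, v)) n by [].
rewrite !e1.
have hD := @D_neq0 _ _ hq n.+1 isT.
have -> : fH (ZIV k.+1) n.+1 = fH (ZIV k) n.+1 * fH ThetaIV n.+1.
  case: k k0 {E} => // k _.
  rewrite /= !eZ one_int !qtermN [RHS]mulrC (@coreTZ _ _ hD k) //.
rewrite /SIV.
ring.
Qed.

Lemma caseTT N u v :
  lc_eval (fun z => SIV z N) (prodIV (Some (ThetaIV, u)) (Some (ThetaIV, v))) =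
  SIV (Some (ThetaIV, u)) N * SIV (Some (ThetaIV, v)) N.
Proof.
pose E N := lc_eval (fun z => SIV z N) (prodIV (Some (ThetaIV, u)) (Some (ThetaIV, v))).
change (E N = SIV (Some (ThetaIV, u)) N * SIV (Some (ThetaIV, v)) N).
apply: (@prod_step R (fun m => fH ThetaIV m) (fun m => fH ThetaIV m)
   (fun N => ms q (map gC u) N) (fun N => ms q (map gC v) N)
   (SIV (Some (ThetaIV, u))) (SIV (Some (ThetaIV, v))) E).
- exact: msum0.
- by move=> n; exact: msumS.
- exact: msum0.
- by move=> n; exact: msumS.
- by rewrite /E /prodIV !lc_eval_cat !evalPreIV !lc_eval_head0 !mulr0 !addr0.
move=> n.
rewrite /E /prodIV !lc_eval_cat !evalPreIV !lc_eval_head.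
rewrite !YCst rmorph1 rmorphN1 !mul1r.
have e1 : forall n w, ms q (map gC (1%N :: w)) n = SIV (Some (ThetaIV, w)) n by [].
rewrite !e1.
have hD := @D_neq0 _ _ hq n.+1 isT.
have -> : fH (ZIV 2) n.+1 = fH ThetaIV n.+1 * fH ThetaIV n.+1 + fH ThetaIV n.+1.
  rewrite /= eZ one_int !qtermN (@coreTT _ _ hD); ring.
rewrite /SIV.
ring.
Qed.

Lemma prodIV_fin N x y : wordA0IV x -> wordA0IV y ->
  lc_eval (fun z => SIV z N) (prodIV x y) = SIV x N * SIV y N.
Proof.
case: x => [[[|k] u]|]; case: y => [[[|l] v]|] //= hx hy.
- exact: caseTT.
- rewrite [RHS]mulrC; apply: caseZT; lia.
- by rewrite lc_eval_single mulr1.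
- apply: caseZT; lia.
- apply: caseZZ; lia.
- by rewrite lc_eval_single mulr1.
- by rewrite lc_eval_single mul1r.
- by rewrite lc_eval_single mul1r.
- by rewrite lc_eval_single mul1r.
Qed.

Lemma typeIV (u v : lc wordIV) :
  all (fun p => wordA0IV p.2) u -> all (fun p => wordA0IV p.2) v ->
  zqIV q (lc_prodIV u v) = zqIV q u * zqIV q v.
Proof.
move=> hu hv.
have ez : forall L, zqIV q L = lc_eval (fun x => limn (SIV x)) L.
  move=> L; rewrite /zqIV; apply: lc_eval_ext => -[[[|k] w]|] //=.
  by rewrite lim_cst.
rewrite !ez /lc_prodIV.
apply: (@assemble R _ _ SIV wordA0IV) => //.
- case=> [[[|k] w]|] hw.
  + apply: (@msum_cvg _ _ hq (hdIV ThetaIV :: map gC w)) => /=; by elim: w {hw} => //= s w ->.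
  + move: hw => /= hw.
    apply: (@msum_cvg _ _ hq (hdIV (ZIV k) :: map gC w)) => /=.
    rewrite subr_gt0; apply/andP; split; first by rewrite ltz_nat.
    by elim: w {hw} => //= s w ->.
  + exact: is_cvg_cst.
- exact: (@lc_prod_all _ _ wordA0IV wordA0IV wordA0IV _ _ prodIV_good hu hv).
- move=> N; apply: (@lc_prod_mult R _ _ _ wordA0IV wordA0IV _ _ _ hu hv).
  exact: prodIV_fin.
Qed.

End TypeIV.

Local Close Scope complex_scope.
Local Close Scope classical_set_scope.

Theorem theorem5p1 (R : realType) (q : R[i]^o) (hq : `|q| < 1) :
  (forall u v : lc (seq letI),
     all (fun p => wordA0I p.2) u -> all (fun p => wordA0I p.2) v ->
     zqI q (lc_stuffle brI u v) = zqI q u * zqI q v)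
  /\
  (forall u v : lc (seq nat),
     all (fun p => wordA0II p.2) u -> all (fun p => wordA0II p.2) v ->
     zqII q (lc_stuffle brII u v) = zqII q u * zqII q v)
  /\
  (forall u v : lc (int * seq int),
     zqIII q (lc_prodIII u v) = zqIII q u * zqIII q v)
  /\
  (forall u v : lc wordIV,
     all (fun p => wordA0IV p.2) u -> all (fun p => wordA0IV p.2) v ->
     zqIV q (lc_prodIV u v) = zqIV q u * zqIV q v).
Proof.
split; [|split; [|split]].
- exact: (@typeI R q hq).
- exact: (@typeII R q hq).
- exact: (@typeIII R q hq).
- exact: (@typeIV R q hq).
Qed.
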